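(* Let $G$ be a graph. For each vertex $v$ let $\mathrm{BFS}(v)$ be a breadth-first search tree of $G$ rooted at $v$ and let $\ell(v)$ be the number of leaves of $\mathrm{BFS}(v)$. Then $\mathrm{gp}(G)\le 1+\min\{\ell(v) : v \text{ is a gp-vertex of } G\}$.
   Context: All graphs are finite, simple and connected. A geodesic is a shortest path. A set $S$ of vertices is a general position set of $G$ if no three vertices of $S$ lie on a common geodesic of $G$; $\mathrm{gp}(G)$ is the maximum cardinality of a general position set, and a general position set of that cardinality is a gp-set. A gp-vertex of $G$ is a vertex lying in at least one gp-set of $G$. *)

(* Defs.v *)
From mathcomp Require Import all_boot.
Set Implicit Arguments. Unset Strict Implicit. Unset Printing Implicit Defensive.

Section Graphs.
Variable T : finType.

Definition simple_connected_graph (e : rel T) : Prop :=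
  [/\ symmetric e, irreflexive e & forall x y : T, connect e x y].

Definition walkn (e : rel T) (x y : T) (n : nat) : bool :=
  [exists p : n.-tuple T, path e x p && (last x p == y)].

(* distance: least n with a walk of length n (all distances in a connected
   graph are < #|T|; the value #|T| is returned for unreachable pairs) *)
Definition dist (e : rel T) (x y : T) : nat :=
  find (walkn e x y) (iota 0 #|T|).

Definition geodesic (e : rel T) (g : seq T) : bool :=
  if g is x :: p then path e x p && (size p == dist e x (last x p))
  else false.

Definition gp_set (e : rel T) (S : {set T}) : Prop :=
  forall x y z : T, x \in S -> y \in S -> z \in S ->
    x != y -> y != z -> x != z ->
    ~ exists g : seq T, [/\ geodesic e g, x \in g, y \in g & z \in g].

Definition is_gp (e : rel T) (k : nat) : Prop :=
  (exists S : {set T}, gp_set e S /\ #|S| = k) /\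
  (forall S : {set T}, gp_set e S -> #|S| <= k).

Definition gp_vertex (e : rel T) (k : nat) (v : T) : Prop :=
  exists S : {set T}, [/\ gp_set e S, #|S| = k & v \in S].

Definition acyclic (t : rel T) : Prop :=
  forall c : seq T, 2 < size c -> uniq c -> ~~ cycle t c.

Definition spanning_tree (e t : rel T) : Prop :=
  [/\ subrel t e, symmetric t, irreflexive t,
      (forall x y : T, connect t x y) & acyclic t].

Definition bfs_tree (e : rel T) (v : T) (t : rel T) : Prop :=
  spanning_tree e t /\ forall u : T, dist t v u = dist e v u.

Definition leaves (t : rel T) : nat := #|[set u : T | #|[set w | t u w]| == 1]|.
End Graphs.

(* Main.v *)
Require Import Defs.
From mathcomp Require Import all_boot zify.
Set Implicit Arguments. Unset Strict Implicit. Unset Printing Implicit Defensive.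

Lemma walknP (T : finType) (r : rel T) x y n :
  reflect (exists p, [/\ size p = n, path r x p & last x p = y]) (walkn r x y n).
Proof.
apply: (iffP existsP) => [[p /andP[hp /eqP hl]] | [p [hs hp hl]]].
  by exists (val p); rewrite size_tuple.
have hs' : size p == n by apply/eqP.
by exists (Tuple hs'); rewrite /= hp hl eqxx.
Qed.

Lemma dist_walk (T : finType) (r : rel T) x y :
  connect r x y -> walkn r x y (dist r x y) /\ dist r x y < #|T|.
Proof.
move=> /connectP [p hp ->].
case: (shortenP hp) => p' hp' hu _.
have hs : size p' < #|T|.
  by have := max_card (mem (x :: p')); rewrite (card_uniqP hu).
have hh : has (walkn r x (last x p')) (iota 0 #|T|).
  apply/hasP; exists (size p'); first by rewrite mem_iota.
  by apply/walknP; exists p'.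
have := nth_find 0 hh; rewrite has_find size_iota in hh.
by rewrite nth_iota // add0n.
Qed.

Lemma dist_min (T : finType) (r : rel T) x y n :
  connect r x y -> walkn r x y n -> dist r x y <= n.
Proof.
move=> /dist_walk [_ hlt] hw.
case: (ltnP n #|T|) => hn; last by apply: ltnW; apply: leq_trans hlt hn.
rewrite leqNgt; apply/negP => hlt'.
have := before_find 0 hlt'; rewrite nth_iota // add0n hw //.
Qed.

Lemma walkn_sym (T : finType) (r : rel T) x y n :
  symmetric r -> walkn r x y n -> walkn r y x n.
Proof.
move=> hs /walknP [p [hsz hp hl]]; apply/walknP.
exists (rev (belast x p)); split.
- by rewrite size_rev size_belast.
- rewrite -hl rev_path; rewrite (@eq_path _ _ r) // => a b; exact: hs.
- case: p hsz hp hl => [|a p] _ _ /= hl; first by [].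
  by rewrite rev_cons last_rcons.
Qed.

Lemma dist_sym (T : finType) (r : rel T) x y :
  symmetric r -> dist r x y = dist r y x.
Proof.
move=> hs; rewrite /dist; apply: eq_find => n.
by apply/idP/idP; apply: walkn_sym.
Qed.

Lemma walkn0 (T : finType) (r : rel T) x y : walkn r x y 0 -> x = y.
Proof. by case/walknP => -[|a p] [] //= _ _ ->. Qed.

Lemma walknSr (T : finType) (r : rel T) x y n :
  walkn r x y n.+1 -> exists2 z, walkn r x z n & r z y.
Proof.
move=> /walknP [p [hs hp hl]].
case/lastP: p hs hp hl => [//|q z]; rewrite size_rcons rcons_path last_rcons.
move=> [hs] /andP [hq hz] <-; exists (last x q) => //.
by apply/walknP; exists q.
Qed.

Lemma walkn_rcons (T : finType) (r : rel T) x z y n :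
  walkn r x z n -> r z y -> walkn r x y n.+1.
Proof.
move=> /walknP [p [hs hp hl]] hr; apply/walknP; exists (rcons p y).
by rewrite size_rcons rcons_path last_rcons hs hp hl hr.
Qed.

Definition par (T : finType) (t : rel T) (v x : T) : T :=
  if x == v then v
  else odflt x [pick y | t y x && ((dist t v y).+1 == dist t v x)].

Lemma dist_vv (T : finType) (t : rel T) v : dist t v v = 0.
Proof.
apply/eqP; rewrite -leqn0; apply: dist_min; first exact: connect0.
by apply/walknP; exists [::].
Qed.

Lemma d_eq0 (T : finType) (t : rel T) v x :
  (forall x y, connect t x y) -> dist t v x = 0 -> x = v.
Proof.
move=> hc h; have [hw _] := dist_walk (hc v x); rewrite h in hw.
by rewrite (walkn0 hw).
Qed.

Lemma par_v (T : finType) (t : rel T) v : par t v v = v.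
Proof. by rewrite /par eqxx. Qed.

Lemma par_spec (T : finType) (t : rel T) v x :
  (forall x y, connect t x y) -> x != v ->
  t (par t v x) x /\ (dist t v (par t v x)).+1 = dist t v x.
Proof.
move=> hc hx.
have : exists z, t z x && ((dist t v z).+1 == dist t v x).
  case hd: (dist t v x) => [|n]; first by rewrite (d_eq0 hc hd) eqxx in hx.
  have [hw _] := dist_walk (hc v x); rewrite hd in hw.
  case: (walknSr hw) => z hz hzx; exists z; rewrite hzx /=.
  have h1 := dist_min (hc v z) hz.
  have [hw' _] := dist_walk (hc v z).
  have h2 := dist_min (hc v x) (walkn_rcons hw' hzx).
  rewrite hd in h2; apply/eqP; apply/eqP; rewrite eqn_leq h2 andbT; exact: h1.
move=> hex; rewrite /par (negbTE hx).
case: pickP => [y /andP [h1 /eqP h2] //|h].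
by exfalso; case: hex => z; rewrite h.
Qed.

Lemma d_iter (T : finType) (t : rel T) v x k :
  (forall x y, connect t x y) ->
  dist t v (iter k (par t v) x) = dist t v x - k.
Proof.
move=> hc; elim: k => [|k IH]; first by rewrite subn0.
rewrite iterS; set y := iter k _ x in IH *.
case: (eqVneq y v) => hy.
  rewrite hy par_v dist_vv; rewrite hy dist_vv in IH.
  by rewrite subnS -IH.
have [_ h] := par_spec hc hy.
by rewrite subnS -IH -h.
Qed.

Lemma iter_dx (T : finType) (t : rel T) v x :
  (forall x y, connect t x y) -> iter (dist t v x) (par t v) x = v.
Proof. by move=> hc; apply: (d_eq0 hc); rewrite d_iter // subnn. Qed.

Lemma path_traj (T : finType) (t : rel T) v :
  (forall x y, connect t x y) -> symmetric t ->
  forall n y, (forall k, k < n -> iter k (par t v) y != v) ->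
  path t y (traject (par t v) (par t v y) n).
Proof.
move=> hc hs; elim=> [//|n IH] y h /=.
have hy : y != v by exact: (h 0).
have [h1 _] := par_spec hc hy.
rewrite hs h1 /=; apply: IH => k hk.
by rewrite -iterSr; apply: h.
Qed.

Lemma uniq_traj (T : finType) (t : rel T) v :
  (forall x y, connect t x y) ->
  forall n y, n <= (dist t v y).+1 -> uniq (traject (par t v) y n).
Proof.
move=> hc; elim=> [//|n IH] y hn /=.
case: n IH hn => [//|n] IH hn.
have hy : y != v.
  by apply/eqP => hy; rewrite hy dist_vv in hn.
have [_ h] := par_spec hc hy.
rewrite IH; last by rewrite h.
rewrite andbT; apply/trajectP => -[i _ hi].
have := d_iter v (par t v y) i hc; rewrite -hi; lia.
Qed.

Lemma leaf_nb (T : finType) (t : rel T) v x w :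
  (forall x y, connect t x y) -> symmetric t -> irreflexive t -> acyclic t ->
  x != v -> (forall c, par t v c != x) -> t x w -> w = par t v x.
Proof.
move=> hc hs hirr hac hx hnc htxw.
case: (eqVneq w (par t v x)) => // hw; exfalso.
set P := par t v.
have [hpx hdx] := par_spec hc hx.
have hwv : w != v.
  apply/eqP => hwv; subst w.
  have h1 : walkn t v x 1.
    apply: (@walkn_rcons _ _ _ v); first by apply/walknP; exists [::].
    by rewrite hs.
  have := dist_min (hc v x) h1; rewrite -hdx ltnS leqn0 => /eqP h0.
  by move: hw; rewrite (d_eq0 hc h0) eqxx.
set A := traject P x (dist t v x).+1.
have hvA : v \in A.
  by apply/trajectP; exists (dist t v x) => //; rewrite iter_dx.
have hex : exists k, iter k P w \in A by exists (dist t v w); rewrite iter_dx.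
case: (ex_minnP hex) => j hj hmin.
have [i hi hz] := trajectP hj.
have hjw : j <= dist t v w by apply: hmin; rewrite iter_dx.
set B := traject P w j.
set c := traject P x i.+1 ++ rev B.
have hsz : 2 < size c.
  rewrite /c size_cat size_traject size_rev size_traject.
  case: i hz {hi c} => [|[|i]] hz; case: j hz {hj hmin hjw B} => [|[|j]] hz //=;
    try lia.
  - by move: htxw; rewrite /= in hz; rewrite hz hirr.
  - by exfalso; move/eqP: (hnc w); apply.
  - by exfalso; move/eqP: hw; apply.
have hnotA : forall k, k < j -> iter k P w \notin A.
  move=> k hk; apply/negP => hA; have := hmin k hA; lia.
have hu : uniq c.
  rewrite /c cat_uniq rev_uniq !uniq_traj //; last by lia.
  rewrite andbT /=; apply/hasPn => y; rewrite mem_rev => /trajectP [k hk ->].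
  apply/negP => hin; have /trajectP [k' hk' he] : iter k P w \in traject P x i.+1 by [].
  move/negP: (hnotA k hk); apply; apply/trajectP; exists k' => //; lia.
have hcy : cycle t c.
  rewrite /c /= rcons_cat cat_path last_traject; apply/andP; split.
    apply: path_traj => // k hk; apply/eqP => he.
    have := d_iter v x k hc; rewrite he dist_vv; lia.
  rewrite -rev_cons -hz.
  have := rev_path t x (rcons B (iter j P w)).
  rewrite last_rcons belast_rcons => ->.
  rewrite (@eq_path _ _ t); last by move=> a b; exact: hs.
  rewrite /B -trajectSr /= htxw /=.
  apply: path_traj => // k hk; apply/eqP => he.
  by move: (hnotA k hk); rewrite he hvA.
by move: (hac c hsz hu); rewrite hcy.
Qed.

Lemma iter_par_v (T : finType) (t : rel T) v k : iter k (par t v) v = v.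
Proof. by elim: k => //= k ->; rewrite par_v. Qed.

Theorem corollary3p4 (T : finType) (e : rel T) (BFS : T -> rel T) (k : nat) :
  simple_connected_graph e ->
  (forall v : T, bfs_tree e v (BFS v)) ->
  is_gp e k ->
  forall v : T, gp_vertex e k v -> k <= 1 + leaves (BFS v).
Proof.
move=> [hse hirre hce] hbfs _ v [S [hgp hcard hvS]].
have [[hsub hst hirrt hct hac] hd] := hbfs v.
set t := BFS v in hsub hst hirrt hct hac hd *.
set P := par t v.
set d := dist t v.
pose desc u := [set y | u \in traject P y (d y).+1].
have hudesc : forall u, u \in desc u.
  by move=> u; rewrite inE /= inE eqxx.
pose Lf u := [arg max_(y > u in desc u) d y].
have hL : forall u, Lf u \in desc u /\ forall y, y \in desc u -> d y <= d (Lf u).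
  by move=> u; rewrite /Lf; case: arg_maxnP => // y hy hmax; split.
have hLv : forall u, u != v -> Lf u != v.
  move=> u hu; apply/eqP => he; have [h1 _] := hL u.
  move: h1; rewrite he inE => /trajectP [kk _ hkk].
  by move: hu; rewrite hkk iter_par_v eqxx.
have hnc : forall u, u != v -> forall c, P c != Lf u.
  move=> u hu c; apply/eqP => hpc.
  have hcv : c != v.
    by apply/eqP => hcv; move: (hLv u hu); rewrite -hpc hcv /P par_v eqxx.
  have [_ hdc] := par_spec hct hcv.
  change ((d (P c)).+1 = d c) in hdc; rewrite hpc in hdc.
  have [h1 h2] := hL u.
  have : c \in desc u.
    rewrite inE in h1 *; move: h1 => /trajectP [kk hkk hue].
    rewrite /desc inE; apply/trajectP; exists kk.+1; last by rewrite iterSr -/P hpc.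
    lia.
  move=> /h2; lia.
have hleaf : forall u, u != v -> Lf u \in [set u | #|[set w | t u w]| == 1].
  move=> u hu; rewrite inE.
  have -> : [set w | t (Lf u) w] = [set P (Lf u)].
    apply/setP => w; rewrite !inE; apply/idP/eqP.
      by apply: leaf_nb => //; [exact: hLv | exact: hnc].
    by move=> ->; have [h _] := par_spec hct (hLv u hu); rewrite hst.
  by rewrite cards1.
have hinj : {in S :\ v &, injective Lf}.
  move=> u1 u2; rewrite !inE => /andP [hu1 hu1S] /andP [hu2 hu2S] he.
  apply/eqP; apply/negP => hne.
  set L := Lf u1 in he.
  have hLv' : L != v := hLv u1 hu1.
  have m1 : u1 \in traject P L (d L).+1 by have [h _] := hL u1; rewrite inE in h.
  have m2 : u2 \in traject P L (d L).+1 by have [h _] := hL u2; rewrite inE -he in h.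
  have mv : v \in traject P L (d L).+1.
    by apply/trajectP; exists (d L) => //; rewrite iter_dx.
  apply: (hgp v u1 u2) => //; [by rewrite eq_sym | by apply/negP | by rewrite eq_sym |].
  exists (traject P L (d L).+1); split => //=.
  apply/andP; split.
    apply: (sub_path hsub); apply: path_traj => // kk hkk; apply/eqP => hv.
    have := d_iter v L kk hct; rewrite hv dist_vv -/d; lia.
  rewrite size_traject last_traject iter_dx // dist_sym // -hd.
  by [].
rewrite (cardsD1 v S) hvS in hcard.
rewrite -hcard add1n ltnS -(card_in_imset hinj) /leaves.
apply: subset_leq_card; apply/subsetP => y /imsetP [u hu ->].
move: hu; rewrite in_setD1 => /andP [hu _]; exact: hleaf.
Qed.
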